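(* For every $\eta\in(0,\tfrac14)$, the Multiplicative Weights mechanism $M^*_\eta$ is $4\eta$-approximately truthful.
   Context: Setting: $n$ forecasters, $m$ binary events with outcomes $\vec y\in\{0,1\}^m$; forecaster $i$ has beliefs $p_i\in[0,1]^m$ (believing events independent) and reports $r_i\in[0,1]^m$. Quadratic score $S(q,y)=1-(y-q)^2$. Multiplicative Weights: $M^*_\eta(R,\vec y)_i=\exp(\eta\sum_tS(r_{it},y_t))/\sum_j\exp(\eta\sum_tS(r_{jt},y_t))$. $M(R;p_i)=\mathbb{E}_{\vec y\sim p_i}M(R,\vec y)$ with $y_t\sim\mathrm{Bernoulli}(p_{it})$ independently. For fixed $p_i$, $\hat r_i$ strictly dominates $r_i$ if $M(\hat r_i,R_{-i};p_i)_i>M(r_i,R_{-i};p_i)_i$ for all $R_{-i}$; $r_i$ is undominated if nothing strictly dominates it. A mechanism is $\gamma$-approximately truthful if for all $p_i$ an undominated report exists and every undominated report $r_i$ satisfies $\|r_i-p_i\|_\infty\le\gamma$. *)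

(* Defs.v *)
From HB Require Import structures.
From mathcomp Require Import all_boot all_order all_algebra.
From mathcomp Require Import reals sequences exp.
Set Implicit Arguments. Unset Strict Implicit. Unset Printing Implicit Defensive.
Import Order.TTheory GRing.Theory Num.Theory.
Local Open Scope ring_scope.

Section Forecast.
Variables (R : realType) (n m : nat).

Definition vec := 'I_m -> R.
Definition profile := 'I_n -> vec.
Definition outcome := {ffun 'I_m -> bool}.

Definition valid (r : vec) : Prop := forall t, 0 <= r t <= 1.

Definition qscore (q : R) (y : bool) : R := 1 - ((y%:R : R) - q) ^+ 2.

Definition MW (eta : R) (Rp : profile) (y : outcome) (i : 'I_n) : R :=
  expR (eta * \sum_(t < m) qscore (Rp i t) (y t)) /
  \sum_(j < n) expR (eta * \sum_(t < m) qscore (Rp j t) (y t)).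

Definition prob_y (p : vec) (y : outcome) : R :=
  \prod_(t < m) (if y t then p t else 1 - p t).

Definition mechanism := profile -> outcome -> 'I_n -> R.

Definition expected (M : mechanism) (Rp : profile) (p : vec) (i : 'I_n) : R :=
  \sum_(y : outcome) prob_y p y * M Rp y i.

Definition upd (Rp : profile) (i : 'I_n) (r : vec) : profile :=
  fun j => if j == i then r else Rp j.

Definition strictly_dominates (M : mechanism) (i : 'I_n) (p rhat r : vec) : Prop :=
  forall Rp : profile, (forall j, j != i -> valid (Rp j)) ->
    expected M (upd Rp i rhat) p i > expected M (upd Rp i r) p i.

Definition undominated (M : mechanism) (i : 'I_n) (p r : vec) : Prop :=
  valid r /\ ~ (exists rhat, valid rhat /\ strictly_dominates M i p rhat r).

(* gamma-approximate truthfulness; ||r - p||_oo <= gamma written coordinatewise *)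
Definition approx_truthful (M : mechanism) (gamma : R) : Prop :=
  forall (i : 'I_n) (p : vec), valid p ->
    (exists r, undominated M i p r) /\
    (forall r, undominated M i p r -> forall t, `|r t - p t| <= gamma).

End Forecast.

(* Main.v *)
Require Import Defs.
From HB Require Import structures.
From mathcomp Require Import all_boot all_order all_algebra.
From mathcomp Require Import reals sequences exp.
From mathcomp Require Import ring lra.
Import Order.TTheory GRing.Theory Num.Theory.
Local Open Scope ring_scope.

Section Real.
Variable R : realType.

Lemma eqLe (x y : R) : x = y -> x <= y.
Proof. by move->. Qed.

Lemma exp_lo (a b : R) : expR b * (a - b) <= expR a - expR b.
Proof.
have h := expR_ge1Dx (a - b). rewrite expRB ler_pdivlMr ?expR_gt0 // in h.
lra.
Qed.

Lemma exp_hi (a b : R) : expR a - expR b <= expR a * (a - b).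
Proof.
have h := expR_ge1Dx (b - a). rewrite expRB ler_pdivlMr ?expR_gt0 // in h.
lra.
Qed.

Lemma exp_shift (a b eta : R) : a - b <= eta -> expR a <= expR eta * expR b.
Proof. by move=> h; rewrite -expRD ler_expR; lra. Qed.

Lemma qsT (x : R) : qscore x true = 1 - (1 - x) ^+ 2.
Proof. by rewrite /qscore /= mulr1n. Qed.
Lemma qsF (x : R) : qscore x false = 1 - x ^+ 2.
Proof. by rewrite /qscore /= mulr0n sub0r sqrrN. Qed.

Lemma core (eta p x w C0 C1 : R) :
 0 < eta -> eta < 1/4 -> 0 <= p -> p + 4*eta < x -> x <= 1 -> 0 < w -> 0 < C0 -> 0 < C1 ->
 C0 <= expR eta * C1 -> C1 <= expR eta * C0 ->
 p * ((w * expR (eta * qscore x true)) / (w * expR (eta * qscore x true) + C1)) +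
 (1 - p) * ((w * expR (eta * qscore x false)) / (w * expR (eta * qscore x false) + C0)) <
 p * ((w * expR (eta * qscore (p + 4*eta) true)) / (w * expR (eta * qscore (p + 4*eta) true) + C1)) +
 (1 - p) * ((w * expR (eta * qscore (p + 4*eta) false)) / (w * expR (eta * qscore (p + 4*eta) false) + C0)).
Proof.
move=> he0 he1 hp0 hx hx1 hw hC0 hC1 hC01 hC10.
set x' := p + 4 * eta.
set a := eta * qscore x' false; set b := eta * qscore x false.
set c := eta * qscore x' true; set e := eta * qscore x true.
set E := expR eta in hC01 hC10 *.
have hab : a - b = eta * (x - x') * (x + x') by rewrite /a /b !qsF; ring.
have hec : e - c = eta * (x - x') * (2 - x - x') by rewrite /e /c !qsT; ring.
have heb : expR e <= E * expR b.
  apply: exp_shift; rewrite /e /b qsT qsF; nra.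
have hac : expR a <= E * expR c.
  apply: exp_shift; rewrite /a /c qsT qsF; rewrite /x'; nra.
have hbe : expR b <= E * expR e.
  apply: exp_shift; rewrite /e /b qsT qsF; nra.
have E4 : E * E * E * E * (1 - 4 * eta) <= 1.
  have h := expR_ge1Dx (- (4 * eta)).
  have -> : E * E * E * E = expR (4 * eta) by rewrite /E -!expRD; congr expR; ring.
  have h2 : expR (4 * eta) * expR (- (4 * eta)) = 1 by rewrite -expRD subrr expR0.
  have := expR_gt0 (4 * eta); nra.
have hE : 1 <= E by rewrite /E -expR0 ler_expR; lra.
have ea := expR_gt0 a; have eb := expR_gt0 b; have ec := expR_gt0 c; have ee := expR_gt0 e.
set z0' := w * expR a; set z0 := w * expR b; set z1' := w * expR c; set z1 := w * expR e.
have z0p : 0 < z0 by rewrite /z0 mulr_gt0.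
have z0'p : 0 < z0' by rewrite /z0' mulr_gt0.
have z1p : 0 < z1 by rewrite /z1 mulr_gt0.
have z1'p : 0 < z1' by rewrite /z1' mulr_gt0.
set D0 := (z0' + C0) * (z0 + C0); set D1 := (z1 + C1) * (z1' + C1).
have D0p : 0 < D0 by rewrite /D0 mulr_gt0 // addr_gt0.
have D1p : 0 < D1 by rewrite /D1 mulr_gt0 // addr_gt0.
have hD : D0 <= E * E * D1.
  have h1 : z0' + C0 <= E * (z1' + C1).
    rewrite mulrDr; apply: lerD => //; rewrite /z0' /z1' mulrCA; apply: ler_wpM2l; lra.
  have h2 : z0 + C0 <= E * (z1 + C1).
    rewrite mulrDr; apply: lerD => //; rewrite /z0 /z1 mulrCA; apply: ler_wpM2l; lra.
  have -> : E * E * D1 = (E * (z1' + C1)) * (E * (z1 + C1)) by rewrite /D1; ring.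
  apply: ler_pM => //; lra.
have dz1 : z1 - z1' <= w * expR e * (e - c).
  rewrite /z1 /z1' -mulrBr -mulrA; apply: ler_wpM2l; [lra | exact: exp_hi].
have dz0 : w * expR b * (a - b) <= z0' - z0.
  have -> : z0' - z0 = w * (expR a - expR b) by rewrite /z0' /z0; ring.
  rewrite -mulrA; apply: ler_wpM2l; [lra | exact: exp_lo].
have ecp : 0 < e - c by rewrite hec; apply: mulr_gt0; [apply: mulr_gt0|]; rewrite /x'; lra.
have abp : 0 < a - b by rewrite hab; apply: mulr_gt0; [apply: mulr_gt0|]; rewrite /x'; lra.
have key1 : p * (e - c) * (E * E * E * E) < (1 - p) * (a - b).
  have hq : p * (e - c) < (1 - 4 * eta) * ((1 - p) * (a - b)).
    rewrite hab hec.
    have hd : 0 < eta * (x - x') by apply: mulr_gt0; rewrite /x'; lra.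
    have hh : p * (2 - x - x') < (1 - 4 * eta) * ((1 - p) * (x + x')).
      have hs : (1 - p) * (x + x') <= 2.
        have : 0 <= p * (x + x') by apply: mulr_ge0; rewrite /x'; lra.
        rewrite /x'; lra.
      have : 4 * eta * ((1 - p) * (x + x')) <= 4 * eta * 2 by apply: ler_wpM2l; lra.
      move: hs; rewrite /x'; lra.
    nra.
  have hpe : 0 <= p * (e - c) by apply: mulr_ge0; lra.
  have hab1 : 0 <= (1 - p) * (a - b) by apply: mulr_ge0; rewrite /x' in hx; lra.
  nra.
have hz1 : z1' <= z1 by rewrite /z1 /z1'; apply: ler_wpM2l; [lra| rewrite ler_expR; lra].
have LK : p * C1 * (z1 - z1') * D0 <= (E * E * E * E) * p * (e - c) * (C0 * w * expR b * D1).
  have s1 : p * C1 * (z1 - z1') * D0 <= p * (E * C0) * (w * expR e * (e - c)) * (E * E * D1).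
    apply: ler_pM; [| lra | | exact: hD].
    - apply: mulr_ge0; [apply: mulr_ge0|]; lra.
    apply: ler_pM; [apply: mulr_ge0; lra | lra | | exact: dz1].
    apply: ler_wpM2l; lra.
  apply: (le_trans s1).
  have s2 : w * expR e * (e - c) <= w * (E * expR b) * (e - c).
    apply: ler_wpM2r; [lra|]; apply: ler_wpM2l; lra.
  have : p * (E * C0) * (w * expR e * (e - c)) * (E * E * D1) <=
         p * (E * C0) * (w * (E * expR b) * (e - c)) * (E * E * D1).
    apply: ler_wpM2r; [(repeat apply: mulr_ge0); lra|].
    apply: ler_wpM2l; [(repeat apply: mulr_ge0); lra| exact: s2].
  move=> h; apply: (le_trans h); apply: eqLe; ring.
have RK : (1 - p) * (a - b) * (C0 * w * expR b * D1) <= (1 - p) * C0 * (z0' - z0) * D1.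
  have hp1 : 0 <= 1 - p by rewrite /x' in hx; lra.
  have : (1 - p) * C0 * (w * expR b * (a - b)) * D1 <= (1 - p) * C0 * (z0' - z0) * D1.
    apply: ler_wpM2r; [lra|]; apply: ler_wpM2l; [apply: mulr_ge0; lra| exact: dz0].
  move=> h; apply: le_trans h; apply: eqLe; ring.
have pos : 0 < C0 * w * expR b * D1 by apply: mulr_gt0 => //; apply: mulr_gt0 => //; apply: mulr_gt0.
have K : p * C1 * (z1 - z1') * D0 < (1 - p) * C0 * (z0' - z0) * D1.
  apply: (le_lt_trans LK); apply: lt_le_trans RK.
  have -> : E * E * E * E * p * (e - c) * (C0 * w * expR b * D1) =
            (p * (e - c) * (E * E * E * E)) * (C0 * w * expR b * D1) by ring.
  by rewrite ltr_pM2r.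
rewrite -subr_gt0.
have -> : p * (z1' / (z1' + C1)) + (1 - p) * (z0' / (z0' + C0)) -
   (p * (z1 / (z1 + C1)) + (1 - p) * (z0 / (z0 + C0))) =
   ((1 - p) * C0 * (z0' - z0) * D1 - p * C1 * (z1 - z1') * D0) / (D0 * D1).
  rewrite /D0 /D1; field.
  by rewrite !gt_eqF // addr_gt0.
by apply: divr_gt0; [lra | apply: mulr_gt0].
Qed.


Lemma qflipT (x : R) : qscore (1 - x) true = qscore x false.
Proof. by rewrite qsT qsF; congr (1 - _ ^+ 2); ring. Qed.
Lemma qflipF (x : R) : qscore (1 - x) false = qscore x true.
Proof. by rewrite qsT qsF; congr (1 - _ ^+ 2); ring. Qed.

Lemma core2 (eta p x w C0 C1 : R) :
 0 < eta -> eta < 1/4 -> p <= 1 -> x < p - 4*eta -> 0 <= x -> 0 < w -> 0 < C0 -> 0 < C1 ->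
 C0 <= expR eta * C1 -> C1 <= expR eta * C0 ->
 p * ((w * expR (eta * qscore x true)) / (w * expR (eta * qscore x true) + C1)) +
 (1 - p) * ((w * expR (eta * qscore x false)) / (w * expR (eta * qscore x false) + C0)) <
 p * ((w * expR (eta * qscore (p - 4*eta) true)) / (w * expR (eta * qscore (p - 4*eta) true) + C1)) +
 (1 - p) * ((w * expR (eta * qscore (p - 4*eta) false)) / (w * expR (eta * qscore (p - 4*eta) false) + C0)).
Proof.
move=> he0 he1 hp hx hx0 hw hC0 hC1 h01 h10.
have := core eta (1 - p) (1 - x) w C1 C0 he0 he1 _ _ _ hw hC1 hC0 h10 h01.
have -> : 1 - p + 4 * eta = 1 - (p - 4 * eta) by ring.
rewrite !qflipT !qflipF (_ : 1 - (1 - p) = p); last by ring.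
move=> H; rewrite [X in X < _]addrC [X in _ < X]addrC; apply: H; lra.
Qed.

Lemma exp_quad (u : R) : u <= 1/2 -> expR u <= 1 + u + 2 * u ^+ 2.
Proof.
move=> hu.
have h := expR_ge1Dx (- u).
have h2 : expR u * expR (- u) = 1 by rewrite -expRD subrr expR0.
have k : expR u * (1 - u) <= 1.
  have := expR_gt0 u => hp.
  have : expR u * (1 + - u) <= expR u * expR (- u) by apply: ler_wpM2l; lra.
  rewrite h2; lra.
have k2 : 1 <= (1 + u + 2 * u ^+ 2) * (1 - u).
  have : 0 <= u ^+ 2 * (1 - 2 * u) by apply: mulr_ge0; [exact: sqr_ge0 | lra].
  move=> hh; apply: (le_trans _ (_ : 1 + u ^+ 2 * (1 - 2 * u) <= _)); first lra.
  apply: eqLe; ring.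
have hp : 0 < 1 - u by lra.
rewrite -(ler_pM2r hp); lra.
Qed.

Lemma hoeff (eta p x : R) : 0 < eta -> eta < 1/4 -> 0 <= p <= 1 -> 0 <= x <= 1 ->
  p * expR (eta * (qscore x true - qscore p true)) +
  (1 - p) * expR (eta * (qscore x false - qscore p false)) <= 1.
Proof.
move=> he0 he1 /andP[hp0 hp1] /andP[hx0 hx1].
set d := x - p.
set u1 := 2 * eta * d * (1 - p); set u0 := - (2 * eta * d * p).
have e1 : eta * (qscore x true - qscore p true) = u1 + - (eta * d ^+ 2)
  by rewrite /u1 /d !qsT; ring.
have e0 : eta * (qscore x false - qscore p false) = u0 + - (eta * d ^+ 2)
  by rewrite /u0 /d !qsF; ring.
rewrite e1 e0 !expRD.
set g := expR (- (eta * d ^+ 2)).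
have gp : 0 < g by exact: expR_gt0.
have hg : g * (1 + eta * d ^+ 2) <= 1.
  have h := expR_ge1Dx (eta * d ^+ 2).
  have h2 : expR (eta * d ^+ 2) * g = 1 by rewrite /g -expRD subrr expR0.
  have : g * (1 + eta * d ^+ 2) <= g * expR (eta * d ^+ 2) by apply: ler_wpM2l; lra.
  rewrite mulrC in h2; rewrite h2 //.
have hd : -1 <= d <= 1 by rewrite /d; apply/andP; split; lra.
have hed : -(1/4) <= eta * d <= 1/4.
  move: hd => /andP[hd1 hd2]; apply/andP; split; nra.
have hu1 : u1 <= 1/2.
  move: hed => /andP[_ h]; rewrite /u1.
  have : 2 * eta * d * (1 - p) = 2 * (eta * d) * (1 - p) by ring.
  move=> ->; nra.
have hu0 : u0 <= 1/2.
  move: hed => /andP[h _]; rewrite /u0.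
  have : - (2 * eta * d * p) = - (2 * (eta * d) * p) by ring.
  move=> ->; nra.
have k1 := exp_quad u1 hu1; have k0 := exp_quad u0 hu0.
have s1 : p * (expR u1 * g) + (1 - p) * (expR u0 * g) <=
          g * (p * (1 + u1 + 2 * u1 ^+ 2) + (1 - p) * (1 + u0 + 2 * u0 ^+ 2)).
  have a1 : p * expR u1 <= p * (1 + u1 + 2 * u1 ^+ 2) by apply: ler_wpM2l.
  have a0 : (1 - p) * expR u0 <= (1 - p) * (1 + u0 + 2 * u0 ^+ 2) by apply: ler_wpM2l; lra.
  have : g * (p * expR u1 + (1 - p) * expR u0) <=
         g * (p * (1 + u1 + 2 * u1 ^+ 2) + (1 - p) * (1 + u0 + 2 * u0 ^+ 2)).
    apply: ler_wpM2l; lra.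
  move=> h; apply: le_trans h; apply: eqLe; ring.
apply: (le_trans s1); apply: le_trans hg; apply: ler_wpM2l; first lra.
have -> : p * (1 + u1 + 2 * u1 ^+ 2) + (1 - p) * (1 + u0 + 2 * u0 ^+ 2) =
          1 + 8 * eta ^+ 2 * d ^+ 2 * (p * (1 - p)) by rewrite /u1 /u0; ring.
have pp : p * (1 - p) <= 1/4 by have := sqr_ge0 (p - 1/2); nra.
have pp0 : 0 <= p * (1 - p) by apply: mulr_ge0; lra.
have ed : 0 <= eta * d ^+ 2 by apply: mulr_ge0; [lra | exact: sqr_ge0].
have : 8 * eta ^+ 2 * d ^+ 2 * (p * (1 - p)) = (eta * d ^+ 2) * (8 * eta * (p * (1 - p))) by ring.
move=> ->.
have : 8 * eta * (p * (1 - p)) <= 1 by nra.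
nra.
Qed.

Lemma ptw (N ep eh : R) : 1 <= N -> 0 < ep -> 0 < eh ->
  1 / N + (N - 1) / N ^+ 2 * (1 - eh / ep) <= ep / (ep + (N - 1) * eh).
Proof.
move=> hN hp hh.
have d1 : 0 <= (N - 1) * eh by apply: mulr_ge0; lra.
have d0 : 0 < ep + (N - 1) * eh by lra.
rewrite -subr_ge0.
have -> : ep / (ep + (N - 1) * eh) - (1 / N + (N - 1) / N ^+ 2 * (1 - eh / ep)) =
   ((N - 1) * (ep - eh)) ^+ 2 / (N ^+ 2 * ep * (ep + (N - 1) * eh)).
  field. by rewrite !gt_eqF //; lra.
apply: divr_ge0; first exact: sqr_ge0.
apply: mulr_ge0; [apply: mulr_ge0|]; [exact: sqr_ge0|lra|lra].
Qed.

End Real.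
Section Comb.
Variables (R : realType) (n m : nat) (eta : R).

Definition Sc (r : vec R m) (y : outcome m) : R := \sum_(t < m) qscore (r t) (y t).

Lemma MW_upd (Rp : profile R n m) i (r : vec R m) y :
  MW eta (upd Rp i r) y i = expR (eta * Sc r y) /
    (expR (eta * Sc r y) + \sum_(j | j != i) expR (eta * Sc (Rp j) y)).
Proof.
rewrite /MW /upd eqxx (bigD1 i) //= eqxx; congr (_ / (_ + _)).
by apply: eq_bigr => j /negbTE ->.
Qed.

Lemma sum_prob (p : vec R m) : \sum_(y : outcome m) prob_y p y = 1.
Proof.
rewrite /prob_y -(bigA_distr_bigA (fun t (b : bool) => if b then p t else 1 - p t)) /=.
by rewrite big1 // => t _; rewrite big_bool /= addrC subrK.
Qed.

Lemma qs_bounds (q : R) b : 0 <= q <= 1 -> 0 <= qscore q b <= 1.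
Proof.
case/andP=> h0 h1; case: b; rewrite ?qsT ?qsF; apply/andP; split; nra.
Qed.

Lemma ratio_le1 (p h : vec R m) : 0 < eta -> eta < 1/4 -> valid p -> valid h ->
  \sum_(y : outcome m) prob_y p y * (expR (eta * Sc h y) / expR (eta * Sc p y)) <= 1.
Proof.
move=> he0 he1 vp vh.
pose F (t : 'I_m) (b : bool) := (if b then p t else 1 - p t) *
   expR (eta * (qscore (h t) b - qscore (p t) b)).
have E y : prob_y p y * (expR (eta * Sc h y) / expR (eta * Sc p y)) = \prod_t F t (y t).
  rewrite -expRB -mulrBr /Sc -sumrB mulr_sumr expR_sum /prob_y -big_split /=.
  by apply: eq_bigr.
rewrite (eq_bigr _ (fun y _ => E y)) -bigA_distr_bigA /=.
apply: prodr_ile1 => t _; rewrite big_bool /F /=.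
have := @hoeff R eta (p t) (h t) he0 he1 (vp t) (vh t) => H.
apply/andP; split => //.
have := vp t => /andP[a b].
apply: addr_ge0; apply: mulr_ge0; rewrite ?expR_ge0 //; lra.
Qed.

Lemma sum_neq_const (c : R) (i : 'I_n) :
  \sum_(j | j != i) c = (n%:R - 1) * c.
Proof.
have h : \sum_(j < n) c = c + \sum_(j | j != i) c := bigD1 i isT.
rewrite sumr_const card_ord -mulr_natl in h.
rewrite mulrBl mul1r; lra.
Qed.

Lemma exist_undom (i : 'I_n) (p : vec R m) : (2 <= n)%N -> 0 < eta -> eta < 1/4 ->
  valid p -> undominated (MW eta) i p p.
Proof.
move=> hn he0 he1 vp; split => // -[rh [vrh Hd]].
have := Hd (fun _ => rh) (fun _ _ => vrh).
apply/negP; rewrite -leNgt /expected.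
have hN : 1 <= (n%:R : R) by rewrite (ler_nat R 1 n); apply: leq_trans hn.
have hN0 : (n%:R : R) != 0 by rewrite gt_eqF //; lra.
have eqh y : MW eta (upd (fun=> rh) i rh) y i = 1 / n%:R.
  rewrite MW_upd sum_neq_const.
  have := expR_gt0 (eta * Sc rh y) => hp.
  have -> : expR (eta * Sc rh y) + (n%:R - 1) * expR (eta * Sc rh y) =
            n%:R * expR (eta * Sc rh y) by ring.
  field; rewrite hN0 gt_eqF //.
rewrite (eq_bigr _ (fun y _ => congr1 (fun z => prob_y p y * z) (eqh y))).
rewrite -mulr_suml sum_prob mul1r.
have eqp y : MW eta (upd (fun=> rh) i p) y i =
   expR (eta * Sc p y) / (expR (eta * Sc p y) + (n%:R - 1) * expR (eta * Sc rh y)).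
  by rewrite MW_upd sum_neq_const.
rewrite (eq_bigr _ (fun y _ => congr1 (fun z => prob_y p y * z) (eqp y))).
have pr0 y : 0 <= prob_y p y.
  apply: prodr_ge0 => t _; have := vp t => /andP[a b]; case: (y t) => //; lra.
have step : \sum_(y : outcome m) prob_y p y * (1 / n%:R + (n%:R - 1) / n%:R ^+ 2 *
     (1 - expR (eta * Sc rh y) / expR (eta * Sc p y))) <=
   \sum_(y : outcome m) prob_y p y * (expR (eta * Sc p y) /
     (expR (eta * Sc p y) + (n%:R - 1) * expR (eta * Sc rh y))).
  apply: ler_sum => y _; apply: ler_wpM2l => //; apply: ptw => //; exact: expR_gt0.
apply: le_trans step.
have -> : \sum_(y : outcome m) prob_y p y * (1 / n%:R + (n%:R - 1) / n%:R ^+ 2 *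
     (1 - expR (eta * Sc rh y) / expR (eta * Sc p y))) =
   (1 / n%:R + (n%:R - 1) / n%:R ^+ 2) * \sum_(y : outcome m) prob_y p y -
   (n%:R - 1) / n%:R ^+ 2 * \sum_(y : outcome m) prob_y p y *
      (expR (eta * Sc rh y) / expR (eta * Sc p y)).
  rewrite !mulr_sumr -sumrB; apply: eq_bigr => y _; ring.
rewrite sum_prob mulr1.
have := @ratio_le1 p rh he0 he1 vp vrh => hr.
have hc : 0 <= (n%:R - 1) / (n%:R : R) ^+ 2.
  apply: divr_ge0; [lra | exact: sqr_ge0].
have : (n%:R - 1) / n%:R ^+ 2 * \sum_(y : outcome m) prob_y p y *
      (expR (eta * Sc rh y) / expR (eta * Sc p y)) <= (n%:R - 1) / (n%:R : R) ^+ 2 * 1.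
  by apply: ler_wpM2l.
lra.
Qed.


Definition flip (t : 'I_m) (y : outcome m) : outcome m :=
  [ffun s => if s == t then ~~ y s else y s].

Lemma flipK t : involutive (flip t).
Proof.
move=> y; apply/ffunP => s; rewrite !ffunE.
by case: (s =P t) => [->|_]; rewrite ?eqxx ?negbK.
Qed.

Lemma flip_t t y : flip t y t = ~~ y t.
Proof. by rewrite ffunE eqxx. Qed.

Lemma flip_s t y s : s != t -> flip t y s = y s.
Proof. by move=> h; rewrite ffunE (negbTE h). Qed.

Lemma sum_split t (F : outcome m -> R) :
  \sum_(y : outcome m) F y = \sum_(y : outcome m | ~~ y t) (F y + F (flip t y)).
Proof.
rewrite (bigID (fun y : outcome m => y t)) /= addrC big_split /=; congr (_ + _).
rewrite (reindex_inj (can_inj (flipK t))) /=.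
by apply: eq_big => y; rewrite ?flip_t ?flipK.
Qed.

Definition Qp (p : vec R m) t (y : outcome m) :=
  \prod_(s | s != t) (if y s then p s else 1 - p s).

Lemma prob_split p t y : prob_y p y = (if y t then p t else 1 - p t) * Qp p t y.
Proof. by rewrite /prob_y (bigD1 t). Qed.

Lemma Qp_flip p t y : Qp p t (flip t y) = Qp p t y.
Proof. by apply: eq_bigr => s hs; rewrite flip_s. Qed.

Definition Aoff (r : vec R m) t (y : outcome m) := \sum_(s | s != t) qscore (r s) (y s).

Lemma Sc_split v t y : Sc v y = qscore (v t) (y t) + Aoff v t y.
Proof. by rewrite /Sc (bigD1 t). Qed.

Lemma Aoff_flip v t y : Aoff v t (flip t y) = Aoff v t y.
Proof. by apply: eq_bigr => s hs; rewrite flip_s. Qed.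

Lemma Aoff_eq (v r : vec R m) t y : (forall s, s != t -> v s = r s) -> Aoff v t y = Aoff r t y.
Proof. by move=> h; apply: eq_bigr => s hs; rewrite h. Qed.

Lemma exists_other (i : 'I_n) : (2 <= n)%N -> exists j : 'I_n, j != i.
Proof.
move=> hn.
have h0 : (0 < n)%N by apply: leq_trans hn.
have h1 : (1 < n)%N by [].
case: (eqVneq i (Ordinal h0)) => [->|ne].
  by exists (Ordinal h1); apply/eqP => /(congr1 val).
by exists (Ordinal h0); rewrite eq_sym.
Qed.

Lemma sum_pos (I : finType) (P : pred I) (G : I -> R) y0 :
  P y0 -> 0 < G y0 -> (forall y, P y -> 0 <= G y) -> 0 < \sum_(y | P y) G y.
Proof.
move=> hP hG hall; rewrite (bigD1 y0) //=.
have : 0 <= \sum_(y | P y && (y != y0)) G y by apply: sumr_ge0 => y /andP[h _]; exact: hall.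
lra.
Qed.

Definition Cs (Rp : profile R n m) (i : 'I_n) y := \sum_(j | j != i) expR (eta * Sc (Rp j) y).

Lemma Cs_pos Rp i y : (2 <= n)%N -> 0 < Cs Rp i y.
Proof.
move=> hn; have [j hj] := exists_other i hn.
apply: (@sum_pos _ (fun j => j != i) _ j) => // [|k _]; [exact: expR_gt0 | exact: expR_ge0].
Qed.

Lemma Cs_flip Rp i t y : 0 <= eta -> (forall j, j != i -> valid (Rp j)) ->
  Cs Rp i y <= expR eta * Cs Rp i (flip t y).
Proof.
move=> he vR; rewrite /Cs mulr_sumr; apply: ler_sum => j hj.
apply: exp_shift.
rewrite !(Sc_split _ t) Aoff_flip flip_t.
have /andP[a1 a2] := qs_bounds _ (y t) (vR j hj t).
have /andP[b1 b2] := qs_bounds _ (~~ y t) (vR j hj t).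
move: a1 a2 b1 b2; set A := Aoff _ _ _; set q1 := qscore _ (y t); set q2 := qscore _ (~~ y t) => a1 a2 b1 b2.
have -> : eta * (q1 + A) - eta * (q2 + A) = eta * (q1 - q2) by ring.
have : eta * (q1 - q2) <= eta * 1 by apply: ler_wpM2l => //; lra.
lra.
Qed.

Lemma Cs_flip2 Rp i t y : 0 <= eta -> (forall j, j != i -> valid (Rp j)) ->
  Cs Rp i (flip t y) <= expR eta * Cs Rp i y.
Proof. by move=> he vR; rewrite -{2}(flipK t y); apply: Cs_flip. Qed.


Lemma MW_upd' (Rp : profile R n m) i (v : vec R m) y :
  MW eta (upd Rp i v) y i = expR (eta * Sc v y) / (expR (eta * Sc v y) + Cs Rp i y).
Proof. exact: MW_upd. Qed.

Lemma eSc (v r : vec R m) t y : (forall s, s != t -> v s = r s) ->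
  expR (eta * Sc v y) = expR (eta * Aoff r t y) * expR (eta * qscore (v t) (y t)).
Proof. by move=> h; rewrite (Sc_split _ t) (Aoff_eq _ _ _ _ h) mulrDr expRD mulrC. Qed.

Lemma dominates (i : 'I_n) (p r rh : vec R m) t :
 (2 <= n)%N -> 0 < eta -> valid p -> (forall s, s != t -> rh s = r s) ->
 (forall w C0 C1, 0 < w -> 0 < C0 -> 0 < C1 -> C0 <= expR eta * C1 -> C1 <= expR eta * C0 ->
   p t * ((w * expR (eta * qscore (r t) true)) / (w * expR (eta * qscore (r t) true) + C1)) +
   (1 - p t) * ((w * expR (eta * qscore (r t) false)) / (w * expR (eta * qscore (r t) false) + C0)) <
   p t * ((w * expR (eta * qscore (rh t) true)) / (w * expR (eta * qscore (rh t) true) + C1)) +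
   (1 - p t) * ((w * expR (eta * qscore (rh t) false)) / (w * expR (eta * qscore (rh t) false) + C0))) ->
 strictly_dominates (MW eta) i p rh r.
Proof.
move=> hn he vp hrh H Rp vR.
rewrite -subr_gt0 /expected -sumrB (sum_split t).
have key (y : outcome m) : ~~ y t -> exists2 D, 0 < D &
   prob_y p y * MW eta (upd Rp i rh) y i - prob_y p y * MW eta (upd Rp i r) y i +
   (prob_y p (flip t y) * MW eta (upd Rp i rh) (flip t y) i -
    prob_y p (flip t y) * MW eta (upd Rp i r) (flip t y) i) = Qp p t y * D.
  move=> hy; have yf : y t = false by apply/negbTE.
  rewrite !MW_upd' !(prob_split _ t) Qp_flip flip_t yf /=.
  rewrite !(eSc rh r t) // !(eSc r r t) // Aoff_flip flip_t yf /=.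
  set w := expR (eta * Aoff r t y).
  set C0 := Cs Rp i y; set C1 := Cs Rp i (flip t y).
  exists (p t * ((w * expR (eta * qscore (rh t) true)) / (w * expR (eta * qscore (rh t) true) + C1)) +
   (1 - p t) * ((w * expR (eta * qscore (rh t) false)) / (w * expR (eta * qscore (rh t) false) + C0)) -
   (p t * ((w * expR (eta * qscore (r t) true)) / (w * expR (eta * qscore (r t) true) + C1)) +
   (1 - p t) * ((w * expR (eta * qscore (r t) false)) / (w * expR (eta * qscore (r t) false) + C0)))); last first.
    set g1 := (w * expR (eta * qscore (rh t) true)) / _.
    set g2 := (w * expR (eta * qscore (rh t) false)) / _.
    set g3 := (w * expR (eta * qscore (r t) true)) / _.
    set g4 := (w * expR (eta * qscore (r t) false)) / _.
    ring.
  rewrite subr_gt0; apply: H.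
  - exact: expR_gt0.
  - exact: Cs_pos.
  - exact: Cs_pos.
  - apply: Cs_flip => //; lra.
  - apply: Cs_flip2 => //; lra.
pose y0 : outcome m := [ffun s => if s == t then false else (1/2 <= p s)].
have Qge y : 0 <= Qp p t y.
  apply: prodr_ge0 => s _; have := vp s => /andP[a b]; case: (y s) => //; lra.
apply: (@sum_pos _ _ _ y0).
- by rewrite ffunE eqxx.
- have hy0 : ~~ y0 t by rewrite ffunE eqxx.
  have [D D0 ->] := key y0 hy0.
  apply: mulr_gt0 => //; apply: prodr_gt0 => s hs; rewrite ffunE (negbTE hs).
  case: ifP => h; lra.
- move=> y hy; have [D D0 ->] := key y hy; apply: mulr_ge0 => //; lra.
Qed.

End Comb.

Theorem mainTheorem8 (R : realType) (n m : nat) (eta : R) :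
  (2 <= n)%N -> 0 < eta -> eta < 1 / 4 ->
  approx_truthful (@MW R n m eta) (4 * eta).
Proof.
move=> hn he0 he1 i p vp; split.
  by exists p; apply: exist_undom.
move=> r [vr Hnd] t.
rewrite leNgt; apply/negP => Hgt.
apply: Hnd.
have /andP[r0 r1] := vr t; have /andP[p0 p1] := vp t.
move: Hgt; rewrite ltr_normr => /orP[hA|hB].
- pose rh : vec R m := fun s => if s == t then p t + 4 * eta else r s.
  exists rh; split.
    move=> s; rewrite /rh; case: eqP => _; last exact: vr.
    apply/andP; split; lra.
  apply: (@dominates R n m eta i p r rh t) => //.
    by move=> s /negbTE; rewrite /rh => ->.
  move=> w C0 C1 hw hC0 hC1 h01 h10; rewrite /rh eqxx.
  apply: core => //; lra.
- pose rh : vec R m := fun s => if s == t then p t - 4 * eta else r s.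
  exists rh; split.
    move=> s; rewrite /rh; case: eqP => _; last exact: vr.
    apply/andP; split; lra.
  apply: (@dominates R n m eta i p r rh t) => //.
    by move=> s /negbTE; rewrite /rh => ->.
  move=> w C0 C1 hw hC0 hC1 h01 h10; rewrite /rh eqxx.
  apply: core2 => //; lra.
Qed.
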